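(* For every instance of preemptive $s$-GPSP there is an optimal solution in which, for each scheduled job $j$, both its start time (the first time $j$ is processed) and its completion time belong to the set $T:=\{r_{j'}+\sum_{i=1}^{\overline p}s_iq_i : j'\in J,\ s_1,\dots,s_{\overline p}\in\{0,\dots,s\}\}$.
   Context: $s$-bounded General Profit Scheduling Problem ($s$-GPSP): given a set $J$ of $n$ jobs, each with release date $r_j$, processing time $p_j$, and a non-increasing profit function $f_j$ of the completion time, select a set $\bar J\subseteq J$ of at most $s$ jobs and schedule them on a single machine, possibly with preemption (jobs may be interrupted and resumed; no job is processed before its release date), so as to maximize $\sum_{j\in\bar J}f_j(C_j)$, $C_j$ being the completion time. $q_1,\dots,q_{\overline p}$ are the distinct processing times in the instance. *)

(* Defs.v *)
From HB Require Import structures.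
From mathcomp Require Import all_boot all_order all_algebra.
Set Implicit Arguments. Unset Strict Implicit. Unset Printing Implicit Defensive.
Import Order.TTheory GRing.Theory Num.Theory.
Local Open Scope ring_scope.

(* A preemptive schedule is a finite list of processing pieces (j, a, b):
   job j is processed on the machine during the time interval [a, b). *)
Definition piece (R : realFieldType) (n : nat) := ('I_n * R * R)%type.

Definition pc_job {R : realFieldType} {n} (x : piece R n) : 'I_n := x.1.1.
Definition pc_start {R : realFieldType} {n} (x : piece R n) : R := x.1.2.
Definition pc_end {R : realFieldType} {n} (x : piece R n) : R := x.2.

Definition starts_of {R : realFieldType} {n} (sg : seq (piece R n)) (j : 'I_n) : seq R :=
  [seq pc_start x | x <- sg & pc_job x == j].
Definition ends_of {R : realFieldType} {n} (sg : seq (piece R n)) (j : 'I_n) : seq R :=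
  [seq pc_end x | x <- sg & pc_job x == j].

Definition start_time {R : realFieldType} {n} (sg : seq (piece R n)) (j : 'I_n) : R :=
  let l := starts_of sg j in \big[Num.min/head 0 l]_(a <- l) a.
Definition compl_time {R : realFieldType} {n} (sg : seq (piece R n)) (j : 'I_n) : R :=
  let l := ends_of sg j in \big[Num.max/head 0 l]_(b <- l) b.

Definition feasible {R : realFieldType} {n} (r p : 'I_n -> R) (s : nat)
    (Jb : {set 'I_n}) (sg : seq (piece R n)) : Prop :=
  [/\ (#|Jb| <= s)%N,
      (forall x, x \in sg -> [/\ pc_job x \in Jb, r (pc_job x) <= pc_start x
                                & pc_start x < pc_end x]),
      pairwise (fun x y => (pc_end x <= pc_start y) || (pc_end y <= pc_start x)) sg
    & (forall j, j \in Jb ->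
         \sum_(x <- sg | pc_job x == j) (pc_end x - pc_start x) = p j)].

Definition value {R : realFieldType} {n} (f : 'I_n -> R -> R)
    (Jb : {set 'I_n}) (sg : seq (piece R n)) : R :=
  \sum_(j in Jb) f j (compl_time sg j).

Definition proc_values {R : realFieldType} {n} (p : 'I_n -> R) : seq R :=
  undup [seq p j | j <- enum 'I_n].

Definition inT {R : realFieldType} {n} (r p : 'I_n -> R) (s : nat) (t : R) : Prop :=
  exists (j' : 'I_n) (k : R -> nat),
    (forall q, q \in proc_values p -> (k q <= s)%N) /\
    t = r j' + \sum_(q <- proc_values p) (k q)%:R * q.

(* Main.v *)
Require Import Defs.
From HB Require Import structures.
From mathcomp Require Import all_boot all_order all_algebra.
From mathcomp Require Import lra.
From Stdlib Require Import Classical.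
Import Order.TTheory GRing.Theory Num.Theory.
Local Open Scope ring_scope.
Set Implicit Arguments. Unset Strict Implicit.


Definition disj {R : realFieldType} {n} (x y : piece R n) : bool :=
  (pc_end x <= pc_start y) || (pc_end y <= pc_start x).
Definition covers {R : realFieldType} {n} (u : R) (x : piece R n) : bool :=
  (pc_start x <= u) && (u < pc_end x).
Definition len {R : realFieldType} {n} (x : piece R n) : R := pc_end x - pc_start x.

Lemma disj_sym (R : realFieldType) n (x y : piece R n) : disj x y = disj y x.
Proof. by rewrite /disj orbC. Qed.

Lemma disj_cov (R : realFieldType) n (x y : piece R n) u :
  disj x y -> covers u x -> covers u y -> False.
Proof.
rewrite /disj /covers => /orP[] H /andP[a1 a2] /andP[b1 b2].
- have := le_lt_trans (le_trans H b1) a2. by rewrite ltxx.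
- have := le_lt_trans (le_trans H a1) b2. by rewrite ltxx.
Qed.

Lemma overlap (R : realFieldType) n (S : seq (piece R n)) x y u :
  pairwise disj S -> x \in S -> y \in S -> covers u x -> covers u y -> x = y.
Proof.
move=> /(pairwiseP x) HP xS yS cx cy.
case: (eqVneq x y) => // nxy; exfalso.
have ix : (index x S < size S)%N by rewrite index_mem.
have iy : (index y S < size S)%N by rewrite index_mem.
have nI : index x S != index y S.
  by apply: contra nxy => /eqP E; rewrite -(nth_index x xS) E nth_index.
case: (ltngtP (index x S) (index y S)) => Hij; last by rewrite Hij eqxx in nI.
- have := HP _ _ ix iy Hij. rewrite !nth_index // => D.
  exact: (disj_cov D cx cy).
- have := HP _ _ iy ix Hij. rewrite !nth_index // => D.
  exact: (disj_cov D cy cx).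
Qed.


Lemma sum_split_disj (R : realFieldType) n (x0 : piece R n) (S : seq (piece R n)) :
  \sum_(y <- S) len y =
  \sum_(y <- [seq y <- S | pc_end y <= pc_start x0]) len y +
  \sum_(y <- [seq y <- S | ~~ (pc_end y <= pc_start x0)]) len y.
Proof. by rewrite (bigID (fun y => pc_end y <= pc_start x0)) !big_filter. Qed.

Lemma mem_drop1 (T : eqType) (a x : T) s : x \in s -> x \in a :: s.
Proof. by rewrite inE => ->; rewrite orbT. Qed.

Lemma meas_le (R : realFieldType) n (k : nat) (S : seq (piece R n)) lo hi :
  (size S < k)%N -> lo <= hi -> pairwise disj S ->
  (forall x, x \in S -> [/\ lo <= pc_start x, pc_start x < pc_end x & pc_end x <= hi]) ->
  \sum_(x <- S) len x <= hi - lo.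
Proof.
elim: k S lo hi => [|k IH] [|x0 S'] lo hi // Hs Hlh.
- move=> _ _; rewrite big_nil; lra.
- have Hs' : (size S' < k)%N by [].
- rewrite pairwise_cons => /andP[Ha Hp] Hx.
  have [h1 h2 h3] := Hx x0 (mem_head _ _).
  rewrite big_cons (sum_split_disj x0).
  have sL : (size [seq y <- S' | (pc_end y <= pc_start x0)%R] < k)%N.
    by rewrite size_filter; exact: leq_ltn_trans (count_size _ _) Hs'.
  have sR : (size [seq y <- S' | ~~ (pc_end y <= pc_start x0)%R] < k)%N.
    by rewrite size_filter; exact: leq_ltn_trans (count_size _ _) Hs'.
  have HL := IH _ lo (pc_start x0) sL h1 (pairwise_filter _ Hp).
  have HR := IH _ (pc_end x0) hi sR h3 (pairwise_filter _ Hp).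
  have := HL _; have := HR _.
  move=> {}HR {}HL.
  suff [A B] : \sum_(y <- [seq y <- S' | pc_end y <= pc_start x0]) len y <= pc_start x0 - lo /\
       \sum_(y <- [seq y <- S' | ~~ (pc_end y <= pc_start x0)]) len y <= hi - pc_end x0.
    rewrite /len; lra.
  split.
  + apply: HL => x; rewrite mem_filter => /andP[e xS].
    have [x1 x2 x3] := Hx x (@mem_drop1 _ x0 x S' xS). by split.
  + apply: HR => x; rewrite mem_filter => /andP[e xS].
    have [x1 x2 x3] := Hx x (@mem_drop1 _ x0 x S' xS); split => //.
    by have := allP Ha x xS; rewrite /disj (negbTE e) orbF.
Qed.

Lemma meas_eq (R : realFieldType) n (k : nat) (S : seq (piece R n)) lo hi :
  (size S < k)%N -> lo <= hi -> pairwise disj S ->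
  (forall x, x \in S -> [/\ lo <= pc_start x, pc_start x < pc_end x & pc_end x <= hi]) ->
  (forall u, lo <= u -> u < hi -> has (covers u) S) ->
  \sum_(x <- S) len x = hi - lo.
Proof.
elim: k S lo hi => [|k IH] [|x0 S'] lo hi // Hs Hlh.
- move=> _ _ Hc; rewrite big_nil.
  case: (ltrP lo hi) => H; last by lra.
  by have := Hc lo (lexx _) H.
- have Hs' : (size S' < k)%N by [].
  rewrite pairwise_cons => /andP[Ha Hp] Hx Hc.
  have [h1 h2 h3] := Hx x0 (mem_head _ _).
  rewrite big_cons (sum_split_disj x0).
  have sL : (size [seq y <- S' | (pc_end y <= pc_start x0)%R] < k)%N.
    by rewrite size_filter; exact: leq_ltn_trans (count_size _ _) Hs'.
  have sR : (size [seq y <- S' | ~~ (pc_end y <= pc_start x0)%R] < k)%N.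
    by rewrite size_filter; exact: leq_ltn_trans (count_size _ _) Hs'.
  have HL := IH _ lo (pc_start x0) sL h1 (pairwise_filter _ Hp).
  have HR := IH _ (pc_end x0) hi sR h3 (pairwise_filter _ Hp).
  have ER : \sum_(y <- [seq y <- S' | ~~ (pc_end y <= pc_start x0)%R]) len y = hi - pc_end x0.
    apply: HR.
    + move=> x; rewrite mem_filter => /andP[e xS].
      have [x1 x2 x3] := Hx x (@mem_drop1 _ x0 x S' xS); split => //.
      by have := allP Ha x xS; rewrite /disj (negbTE e) orbF.
    + move=> u u1 u2.
      have /hasP[y] := Hc u (le_trans (ltW (le_lt_trans h1 h2)) u1) u2.
      rewrite inE => /orP[/eqP -> | yS] cy.
        by move: cy; rewrite /covers => /andP[_ cy]; lra.
      apply/hasP; exists y => //; rewrite mem_filter yS andbT.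
      apply/negP => e; move: cy; rewrite /covers => /andP[_ cy]; lra.
  have EL : \sum_(y <- [seq y <- S' | (pc_end y <= pc_start x0)%R]) len y = pc_start x0 - lo.
    apply: HL.
    + move=> x; rewrite mem_filter => /andP[e xS].
      have [x1 x2 x3] := Hx x (@mem_drop1 _ x0 x S' xS). by split.
    + move=> u u1 u2.
      have /hasP[y] := Hc u u1 (lt_le_trans u2 (ltW (lt_le_trans h2 h3))).
      rewrite inE => /orP[/eqP -> | yS] cy.
        by move: cy; rewrite /covers => /andP[cy _]; lra.
      apply/hasP; exists y => //; rewrite mem_filter yS andbT.
      have := allP Ha y yS; rewrite /disj => /orP[e|//].
      move: cy; rewrite /covers => /andP[cy _]; lra.
  rewrite EL ER /len; lra.
Qed.


Lemma ex_min (T : eqType) (R : realFieldType) (g : T -> R) (P : T -> Prop) (l : seq T) :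
  (exists y, y \in l /\ P y) ->
  exists y, [/\ y \in l, P y & forall z, z \in l -> P z -> g y <= g z].
Proof.
elim: l => [|a l IH]; first by case=> y [].
case=> y [yl Py].
case: (classic (exists y, y \in l /\ P y)) => [/IH [m [ml Pm Hm]] | Hn].
- case: (classic (P a)) => Pa.
  + case: (lerP (g a) (g m)) => H.
    * exists a; split => //; first exact: mem_head.
      move=> z; rewrite inE => /orP[/eqP -> //| zl] Pz.
      exact: le_trans H (Hm z zl Pz).
    * exists m; split => //; first by rewrite inE ml orbT.
      move=> z; rewrite inE => /orP[/eqP -> | zl] Pz; first exact: ltW H.
      exact: Hm.
  + exists m; split => //; first by rewrite inE ml orbT.
    move=> z; rewrite inE => /orP[/eqP -> //| zl] Pz; exact: Hm.
- have Pa : P a.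
    move: yl; rewrite inE => /orP[/eqP <- //| yl]; exfalso; apply: Hn; by exists y.
  exists a; split => //; first exact: mem_head.
  move=> z; rewrite inE => /orP[/eqP -> //| zl] Pz; exfalso; apply: Hn; by exists z.
Qed.

Lemma ex_max_below (T : eqType) (R : realFieldType) (g : T -> R) (l : seq T) m0 rho :
  m0 < rho -> exists m, [/\ m0 <= m, m < rho & forall y, y \in l -> g y < rho -> g y <= m].
Proof.
move=> H; elim: l => [|a l [m [m1 m2 Hm]]]; first by exists m0.
case: (ltrP (g a) rho) => Ha.
- exists (Num.max m (g a)); split.
  + by rewrite le_max m1.
  + by rewrite gt_max m2 Ha.
  + move=> y; rewrite inE => /orP[/eqP ->|yl] Hy; first by rewrite le_max lexx orbT.
    by rewrite le_max Hm.
- exists m; split => //.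
  move=> y; rewrite inE => /orP[/eqP ->|yl] Hy; first by rewrite ltNge Ha in Hy.
  exact: Hm.
Qed.

Lemma count_le_in (T : eqType) (a b : pred T) (l : seq T) :
  (forall y, y \in l -> a y -> b y) -> (count a l <= count b l)%N.
Proof.
elim: l => [//|c l IH] Hab /=.
have H := IH (fun y yl' => Hab y (mem_drop1 _ yl')).
case Hac: (a c); first by rewrite (Hab c (mem_head _ _) Hac).
rewrite add0n; apply: leq_trans H _; exact: leq_addl.
Qed.

Lemma count_lt (T : eqType) (a b : pred T) (l : seq T) y0 :
  (forall y, y \in l -> a y -> b y) -> y0 \in l -> b y0 -> ~~ a y0 ->
  (count a l < count b l)%N.
Proof.
elim: l => [//|c l IH] Hab; rewrite inE => /orP[/eqP <-|yl] Hb Ha /=.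
- rewrite (negbTE Ha) Hb add0n add1n ltnS.
  apply: count_le_in => y yl'; exact: Hab (mem_drop1 _ yl').
- have := IH (fun y yl' => Hab y (mem_drop1 _ yl')) yl Hb Ha.
  case Hac: (a c); first by rewrite (Hab c (mem_head _ _) Hac).
  move=> H; rewrite add0n; apply: leq_trans H _; exact: leq_addl.
Qed.

Definition ins_spec (R : realFieldType) n (k : 'I_n) (B : seq (piece R n)) (t rem : R)
  (P : seq (piece R n)) : Prop :=
  [/\ forall x, x \in P -> [/\ pc_job x = k, t <= pc_start x & pc_start x < pc_end x],
      pairwise disj (P ++ B),
      \sum_(x <- P) len x = rem
    & forall u, t <= u -> has (fun x => u < pc_end x) P -> has (covers u) (P ++ B)].

Lemma ins_single (R : realFieldType) n (k : 'I_n) (B : seq (piece R n)) t rem :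
  0 < rem -> pairwise disj B ->
  (forall y, y \in B -> (pc_end y <= t) || (t + rem <= pc_start y)) ->
  ins_spec k B t rem [:: ((k, t), t + rem)].
Proof.
move=> Hr HB Hy; split.
- move=> x; rewrite inE => /eqP -> /=; split => //; rewrite /pc_start /pc_end /=; lra.
- rewrite cat1s pairwise_cons HB andbT; apply/allP => y yB.
  rewrite /disj /pc_start /pc_end /=.
  by case/orP: (Hy y yB) => ->; rewrite ?orbT.
- by rewrite big_cons big_nil /len /pc_start /pc_end /=; lra.
- move=> u ut /=; rewrite orbF => Hu; apply/orP; left.
  by rewrite /covers /= ut.
Qed.

Lemma insert (R : realFieldType) n (k : 'I_n) (B : seq (piece R n)) (m : nat) :
  pairwise disj B -> (forall y, y \in B -> pc_start y < pc_end y) ->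
  forall t rem : R, (count (fun y => (t < pc_end y)%R) B < m)%N -> 0 < rem ->
  exists P, ins_spec k B t rem P.
Proof.
move=> HB HBlt; elim: m => [//|m IH] t rem Hc Hr.
rewrite ltnS in Hc.
have unc : ~~ has (covers t) B -> forall y, y \in B -> (pc_end y <= t) || (t < pc_start y).
  move=> Hn y yB; have : ~~ covers t y by apply: contra Hn => H; apply/hasP; exists y.
  rewrite /covers negb_and -!ltNge -leNgt orbC. done.
case: (boolP (has (covers t) B)) => [/hasP[y yB cy] | Hnc].
- move: (cy) => /andP[cy1 cy2].
  have Hc' : (count (fun z => (pc_end y < pc_end z)%R) B < m)%N.
    apply: (leq_trans _ Hc).
    apply: (@count_lt _ (fun z => pc_end y < pc_end z) (fun z => t < pc_end z) B y) => //.
    + move=> z _ /= H; exact: lt_trans cy2 H.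
    + by rewrite /= ltxx.
  have [P [P1 P2 P3 P4]] := IH (pc_end y) rem Hc' Hr.
  exists P; split => //.
  + move=> x xP; have [a1 a2 a3] := P1 x xP; split => //; lra.
  + move=> u ut Hu; case: (ltrP u (pc_end y)) => Hy.
    * apply/hasP; exists y; first by rewrite mem_cat yB orbT.
      by rewrite /covers Hy (le_trans cy1 ut).
    * exact: P4 u Hy Hu.
- case: (boolP (has (fun y => t < pc_start y) B)) => [/hasP[y1 y1B Hy1] | Hns].
  + have [y0 [y0B Py0 Hmin]] := @ex_min _ _ pc_start (fun y => t < pc_start y) B
        (ex_intro _ y1 (conj y1B Hy1)).
    case: (lerP (t + rem) (pc_start y0)) => Hg.
    * exists [:: ((k, t), t + rem)]; apply: ins_single => // y yB.
      case/orP: (unc Hnc y yB) => [->//|H]; apply/orP; right.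
      exact: le_trans Hg (Hmin y yB H).
    * have Hr' : 0 < rem - (pc_start y0 - t) by lra.
      have Hc' : (count (fun z => (pc_end y0 < pc_end z)%R) B < m)%N.
        apply: (leq_trans _ Hc).
        apply: (@count_lt _ (fun z => pc_end y0 < pc_end z) (fun z => t < pc_end z) B y0) => //.
        - move=> z _ /= H; exact: lt_trans (lt_trans Py0 (HBlt _ y0B)) H.
        - exact: lt_trans Py0 (HBlt _ y0B).
        - by rewrite /= ltxx.
      have [P [P1 P2 P3 P4]] := IH (pc_end y0) _ Hc' Hr'.
      have y0lt := HBlt _ y0B.
      exists (((k, t), pc_start y0) :: P); split.
      - move=> x; rewrite inE => /orP[/eqP -> | xP].
          by split => //; rewrite /pc_start /pc_end /=; lra.
        have [a1 a2 a3] := P1 x xP; split => //; lra.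
      - rewrite cat_cons pairwise_cons P2 andbT; apply/allP => z.
        rewrite mem_cat => /orP[zP | zB]; rewrite /disj.
          have [a1 a2 a3] := P1 z zP; apply/orP; left.
          exact: (ltW (lt_le_trans y0lt a2)).
        case/orP: (unc Hnc z zB) => H; apply/orP; [right | left]; first done.
        exact: Hmin z zB H.
      - rewrite big_cons P3 /len /pc_start /pc_end /=; lra.
      - move=> u ut Hu; case: (ltrP u (pc_start y0)) => Hu1.
          by rewrite cat_cons /= /covers /pc_start /pc_end /= ut Hu1.
        case: (ltrP u (pc_end y0)) => Hu2.
          apply/hasP; exists y0; first by rewrite cat_cons inE mem_cat y0B !orbT.
          by rewrite /covers Hu1 Hu2.
        have : has (covers u) (P ++ B).
          apply: P4 => //; move: Hu => /= /orP[|//].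
          rewrite {1}/pc_end /= => H; lra.
        by rewrite cat_cons /= => ->; rewrite orbT.
  + exists [:: ((k, t), t + rem)]; apply: ins_single => // y yB.
    case/orP: (unc Hnc y yB) => [->//|H].
    by exfalso; move/negP: Hns; apply; apply/hasP; exists y.
Qed.


Definition build_spec (R : realFieldType) n (r p : 'I_n -> R) (L : seq 'I_n)
  (S : seq (piece R n)) : Prop :=
 [/\ forall x, x \in S -> [/\ pc_job x \in L, r (pc_job x) <= pc_start x & pc_start x < pc_end x],
     pairwise disj S,
     forall j, j \in L -> \sum_(x <- S | pc_job x == j) len x = p j
   & forall x, x \in S -> forall u, r (pc_job x) <= u -> u < pc_end x ->
        has (fun y => (index (pc_job y) L <= index (pc_job x) L)%N && covers u y) S].

Lemma index_rcons_in (T : eqType) (L : seq T) k j :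
  j \in L -> index j (rcons L k) = index j L.
Proof. by move=> H; rewrite -cats1 index_cat H. Qed.

Lemma build (R : realFieldType) n (r p : 'I_n -> R) :
  (forall j, 0 < p j) -> forall L, uniq L -> exists S, build_spec r p L S.
Proof.
move=> Hp; elim/last_ind => [_|L k IH].
  exists [::]; split => //; by move=> j.
rewrite rcons_uniq => /andP[kL uL].
have [S [S1 S2 S3 S4]] := IH uL.
have Slt : forall y, y \in S -> pc_start y < pc_end y by move=> y /S1 [].
have [P [P1 P2 P3 P4]] := @insert R n k S (count (fun y => (r k < pc_end y)%R) S).+1 S2 Slt
   (r k) (p k) (ltnSn _) (Hp k).
have jobS : forall x, x \in S -> pc_job x != k.
  by move=> x /S1 [H _ _]; apply: contraNneq kL => <-.
exists (P ++ S); split.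
- move=> x; rewrite mem_cat => /orP[xP | xS].
    have [a1 a2 a3] := P1 x xP; rewrite a1; split => //.
    by rewrite mem_rcons mem_head.
  have [a1 a2 a3] := S1 x xS; split => //; by rewrite mem_rcons inE a1 orbT.
- exact: P2.
- move=> j; rewrite mem_rcons inE => /orP[/eqP -> | jL]; rewrite big_cat /=.
  + rewrite [X in _ + X]big1_seq ?addr0; last first.
      by move=> x /andP[H xS]; rewrite (negbTE (jobS x xS)) in H.
    rewrite -P3 big_seq_cond [RHS]big_seq_cond; apply: eq_bigl => x.
    case xP: (x \in P) => /=; last by rewrite ?andbF.
    idtac.
    by have [-> _ _] := P1 x xP; rewrite eqxx.
  + rewrite big1_seq ?add0r; first exact: S3.
    move=> x /andP[/eqP H xP]; have [a1 _ _] := P1 x xP.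
    by move: kL; rewrite -a1 H jL.
- move=> x; rewrite mem_cat => /orP[xP | xS] u u1 u2.
  + have [a1 a2 a3] := P1 x xP.
    rewrite a1 in u1 *.
    have /hasP[y yPS cy] := P4 u u1 (introT hasP (ex_intro2 _ _ x xP u2)).
    apply/hasP; exists y => //; rewrite cy andbT.
    have -> : index k (rcons L k) = size L.
      by rewrite -cats1 index_cat (negbTE kL) /= eqxx addn0.
    have : pc_job y \in rcons L k.
      move: yPS; rewrite mem_cat => /orP[yP | yS].
        by have [-> _ _] := P1 y yP; rewrite mem_rcons mem_head.
      by have [H _ _] := S1 y yS; rewrite mem_rcons inE H orbT.
    by rewrite -index_mem size_rcons ltnS.
  + have /hasP[y yS /andP[Hi cy]] := S4 x xS u u1 u2.
    apply/hasP; exists y; first by rewrite mem_cat yS orbT.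
    have [jx _ _] := S1 x xS; have [jy _ _] := S1 y yS.
    by rewrite !index_rcons_in // Hi cy.
Qed.


Definition greedy (R : realFieldType) n (r : 'I_n -> R) (S : seq (piece R n)) : Prop :=
  forall x, x \in S -> forall u, r (pc_job x) <= u -> u < pc_end x -> has (covers u) S.

Definition cut (R : realFieldType) n (S : seq (piece R n)) (v : R) : Prop :=
  forall x y, x \in S -> y \in S -> pc_job x = pc_job y -> pc_start x < v -> v < pc_end y -> False.

Lemma rho_lemma (R : realFieldType) n (r : 'I_n -> R) (S : seq (piece R n)) v y0 :
  (forall x, x \in S -> r (pc_job x) <= pc_start x /\ pc_start x < pc_end x) ->
  greedy r S -> y0 \in S -> pc_start y0 < v ->
  (forall u, pc_start y0 <= u -> u < v -> has (covers u) S) ->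
  exists rho, [/\ rho <= pc_start y0, (exists x0, x0 \in S /\ rho = r (pc_job x0)),
     (forall u, rho <= u -> u < v -> has (covers u) S), cut S rho
   & (forall x, x \in S -> rho < pc_end x -> rho <= r (pc_job x))].
Proof.
move=> HS Hg y0S y0v y0c.
pose Q := fun y : piece R n => pc_start y < v /\ forall u, pc_start y <= u -> u < v -> has (covers u) S.
have [x0 [x0S [Qx1 Qx2] Hmin]] := @ex_min _ _ pc_start Q S (ex_intro _ y0 (conj y0S (conj y0v y0c))).
set rho := pc_start x0.
have LUc : forall y, y \in S -> pc_start y < rho -> pc_end y < rho.
  move=> y yS Hy; case: (ltrP (pc_end y) rho) => // He; exfalso.
  have Qy : Q y.
    split; first exact: lt_trans Hy Qx1.
    move=> u u1 u2; case: (ltrP u (pc_end y)) => Hu.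
      by apply/hasP; exists y => //; rewrite /covers u1 Hu.
    apply: Qx2 => //; exact: le_trans He Hu.
  have := Hmin y yS Qy; rewrite leNgt Hy. done.
have LU : forall x, x \in S -> r (pc_job x) < rho -> pc_end x < rho.
  move=> x xS Hx; case: (ltrP (pc_end x) rho) => // He; exfalso.
  have [m [m1 m2 Hm]] := @ex_max_below _ _ pc_end S _ _ Hx.
  have /hasP[y yS /andP[c1 c2]] := Hg x xS ((m + rho) / 2) (ltac:(lra)) (ltac:(lra)).
  have := LUc y yS (ltac:(lra)) => Hey.
  have := Hm y yS Hey; lra.
have [r0 r1] := HS x0 x0S.
have Erho : rho = r (pc_job x0).
  case: (ltrP (r (pc_job x0)) rho) => H; last by apply/eqP; rewrite eq_le H r0.
  have := LU x0 x0S H; rewrite /rho; lra.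
exists rho; split => //.
- exact: Hmin y0 y0S (conj y0v y0c).
- by exists x0.
- move=> x y xS yS Ej Hx Hy.
  have [a1 a2] := HS x xS.
  have := LU y yS (ltac:(rewrite -Ej; lra)); lra.
- move=> x xS Hx; case: (ltrP (r (pc_job x)) rho) => // H.
  have := LU x xS H; lra.
Qed.


Lemma regroup (R : realFieldType) n (s : seq (piece R n)) (A : {set 'I_n}) (w : piece R n -> R) :
  \sum_(j in A) \sum_(x <- s | pc_job x == j) w x = \sum_(x <- s | pc_job x \in A) w x.
Proof.
under eq_bigr => j _ do rewrite big_mkcond.
rewrite exchange_big /= [RHS]big_mkcond; apply: eq_bigr => x _.
rewrite -big_mkcondr.
case: (boolP (pc_job x \in A)) => H.
- rewrite (big_pred1 (pc_job x)) // => j /=.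
  by case: (eqVneq (pc_job x) j) => [<-|]; rewrite ?H ?andbF ?andbT // eq_sym.
- rewrite big_pred0 // => j /=.
  by case: (eqVneq (pc_job x) j) => [<-|]; rewrite ?(negbTE H) ?andbF.
Qed.

Definition blockset (R : realFieldType) n (S : seq (piece R n)) (rho v : R) : {set 'I_n} :=
  [set j | has (fun x => (pc_job x == j) && (pc_start x < v) && (rho < pc_end x)) S].

Lemma block (R : realFieldType) n (p : 'I_n -> R) (S : seq (piece R n)) rho v :
  pairwise disj S -> (forall x, x \in S -> pc_start x < pc_end x) -> rho <= v ->
  cut S rho -> cut S v -> (forall u, rho <= u -> u < v -> has (covers u) S) ->
  (forall x, x \in S -> \sum_(y <- S | pc_job y == pc_job x) len y = p (pc_job x)) ->
  v - rho = \sum_(j in blockset S rho v) p j.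
Proof.
move=> Hd Hlt Hrv Cr Cv Hc Hsum.
set A := blockset S rho v.
have inside : forall x, x \in S -> pc_job x \in A -> rho <= pc_start x /\ pc_end x <= v.
  move=> x xS; rewrite inE => /hasP[y yS /andP[/andP[/eqP Ej y1] y2]].
  split.
  - case: (ltrP (pc_start x) rho) => // H; exfalso; exact: Cr x y xS yS (esym Ej) H y2.
  - case: (ltrP v (pc_end x)) => // H; exfalso; exact: Cv y x yS xS Ej y1 H.
have E1 : \sum_(j in A) p j = \sum_(x <- S | pc_job x \in A) len x.
  rewrite -regroup; apply: eq_bigr => j; rewrite inE => /hasP[y yS /andP[/andP[/eqP Ej _] _]].
  by rewrite -Ej Hsum.
rewrite E1 big_seq_cond (eq_bigl (fun x => (x \in S) && ((pc_start x < v) && (rho < pc_end x)))).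
- rewrite -big_seq_cond -big_filter; symmetry; apply: (meas_eq (k := (size S).+1)).
  + by rewrite size_filter ltnS count_size.
  + exact: Hrv.
  + exact: pairwise_filter.
  + move=> x; rewrite mem_filter => /andP[/andP[x1 x2] xS].
    have xA : pc_job x \in A by rewrite inE; apply/hasP; exists x => //; rewrite eqxx x1 x2.
    have [i1 i2] := inside x xS xA; split => //; exact: Hlt.
  + move=> u u1 u2; have /hasP[y yS cy] := Hc u u1 u2.
    apply/hasP; exists y => //; rewrite mem_filter yS andbT.
    by move: cy => /andP[c1 c2]; rewrite (le_lt_trans c1 u2) (le_lt_trans u1 c2).
- move=> x /=; case xS: (x \in S) => //=.
  apply/idP/idP => [xA | /andP[x1 x2]].
  + have [i1 i2] := inside x xS xA; have := Hlt x xS => h.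
    apply/andP; split; [exact: lt_le_trans h i2 | exact: le_lt_trans i1 h].
  + by rewrite inE; apply/hasP; exists x => //; rewrite eqxx x1 x2.
Qed.


Lemma sum_proc (R : realFieldType) n (p : 'I_n -> R) (A : {set 'I_n}) :
  \sum_(i in A) p i =
  \sum_(q <- proc_values p) (#|[set i in A | p i == q]|)%:R * q.
Proof.
have E : forall q, (#|[set i in A | p i == q]|)%:R * q = \sum_(i in A) (if p i == q then q else 0).
  move=> q; rewrite mulr_natl -sumr_const -big_mkcondr /=.
  by apply: eq_bigl => i; rewrite inE.
under [RHS]eq_bigr => q _ do rewrite E.
rewrite exchange_big /=; apply: eq_bigr => i _.
rewrite -big_mkcond /= -big_filter.
have -> : [seq q <- proc_values p | p i == q] = [:: p i].
  rewrite -(@filter_pred1_uniq _ (proc_values p) (p i)).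
  - by apply: eq_filter => q /=; rewrite eq_sym.
  - exact: undup_uniq.
  - by rewrite mem_undup; apply: map_f; rewrite mem_enum.
by rewrite big_seq1.
Qed.

Lemma inT_block (R : realFieldType) n (r p : 'I_n -> R) s (A : {set 'I_n}) j0 :
  (#|A| <= s)%N -> inT r p s (r j0 + \sum_(i in A) p i).
Proof.
move=> HA; exists j0, (fun q => #|[set i in A | p i == q]|); split; last by rewrite sum_proc.
move=> q _; apply: leq_trans HA; apply: subset_leq_card; apply/subsetP => i.
by rewrite inE => /andP[].
Qed.

Lemma bigmax_prop (R : realFieldType) (l : seq R) idx :
  let M := \big[Num.max/idx]_(b <- l) b in
  [/\ M \in idx :: l, idx <= M & forall b, b \in l -> b <= M].
Proof.
elim: l => [|a l [IH1 IH2 IH3]] /=; first by rewrite big_nil mem_head lexx.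
rewrite big_cons; split.
- case: (leP a (\big[Num.max/idx]_(b <- l) b)) => _.
  + by move: IH1; rewrite !inE => /orP[->|->]; rewrite ?orbT.
  + by rewrite !inE eqxx orbT.
- by rewrite le_max IH2 orbT.
- move=> b; rewrite inE => /orP[/eqP ->|bl]; first by rewrite le_max lexx.
  by rewrite le_max IH3 ?orbT.
Qed.

Lemma bigmin_prop (R : realFieldType) (l : seq R) idx :
  let M := \big[Num.min/idx]_(b <- l) b in
  [/\ M \in idx :: l, M <= idx & forall b, b \in l -> M <= b].
Proof.
elim: l => [|a l [IH1 IH2 IH3]] /=; first by rewrite big_nil mem_head lexx.
rewrite big_cons; split.
- case: (leP a (\big[Num.min/idx]_(b <- l) b)) => _.
  + by rewrite !inE eqxx orbT.
  + by move: IH1; rewrite !inE => /orP[->|->]; rewrite ?orbT.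
- by rewrite ge_min IH2 orbT.
- move=> b; rewrite inE => /orP[/eqP ->|bl]; first by rewrite ge_min lexx.
  by rewrite ge_min IH3 ?orbT.
Qed.

Lemma compl_prop (R : realFieldType) n (S : seq (piece R n)) k x1 :
  x1 \in S -> pc_job x1 = k ->
  (exists2 x, x \in S & pc_job x = k /\ pc_end x = compl_time S k) /\
  (forall x, x \in S -> pc_job x = k -> pc_end x <= compl_time S k).
Proof.
move=> x1S jx1; rewrite /compl_time /ends_of.
set l := [seq pc_end x | x <- S & pc_job x == k].
have hl : head 0 l \in l.
  have : l != [::].
    apply/eqP => E; have : pc_end x1 \in l by apply: map_f; rewrite mem_filter jx1 eqxx x1S.
    by rewrite E.
  by case: (l) => // a l' _; rewrite mem_head.
have [M1 M2 M3] := bigmax_prop l (head 0 l).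
split.
- have : \big[Num.max/head 0 l]_(b <- l) b \in l.
    by move: M1; rewrite inE => /orP[/eqP ->|].
  case/mapP => x; rewrite mem_filter => /andP[/eqP jx xS] Ex.
  by exists x.
- move=> x xS jx; apply: M3; apply: map_f; by rewrite mem_filter jx eqxx xS.
Qed.

Lemma start_prop (R : realFieldType) n (S : seq (piece R n)) k x1 :
  x1 \in S -> pc_job x1 = k ->
  (exists2 x, x \in S & pc_job x = k /\ pc_start x = start_time S k) /\
  (forall x, x \in S -> pc_job x = k -> start_time S k <= pc_start x).
Proof.
move=> x1S jx1; rewrite /start_time /starts_of.
set l := [seq pc_start x | x <- S & pc_job x == k].
have hl : head 0 l \in l.
  have : l != [::].
    apply/eqP => E; have : pc_start x1 \in l by apply: map_f; rewrite mem_filter jx1 eqxx x1S.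
    by rewrite E.
  by case: (l) => // a l' _; rewrite mem_head.
have [M1 M2 M3] := bigmin_prop l (head 0 l).
split.
- have : \big[Num.min/head 0 l]_(b <- l) b \in l.
    by move: M1; rewrite inE => /orP[/eqP ->|].
  case/mapP => x; rewrite mem_filter => /andP[/eqP jx xS] Ex.
  by exists x.
- move=> x xS jx; apply: M3; apply: map_f; by rewrite mem_filter jx eqxx xS.
Qed.


Lemma index_eq_inj (T : eqType) (L : seq T) i j :
  i \in L -> j \in L -> index i L = index j L -> i = j.
Proof. by move=> iL jL E; rewrite -(nth_index i iL) E nth_index. Qed.

Lemma sub_props (R : realFieldType) n (r p : 'I_n -> R) L S (Q : pred 'I_n) :
  build_spec r p L S ->
  (forall i j, Q j -> j \in L -> i \in L -> (index i L <= index j L)%N -> Q i) ->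
  let S' := [seq x <- S | Q (pc_job x)] in
  [/\ forall x, x \in S' -> r (pc_job x) <= pc_start x /\ pc_start x < pc_end x,
      greedy r S', pairwise disj S', (forall x, x \in S' -> pc_start x < pc_end x)
    & forall x, x \in S' -> \sum_(y <- S' | pc_job y == pc_job x) len y = p (pc_job x)].
Proof.
move=> [S1 S2 S3 S4] Hd S'.
have memS' : forall x, x \in S' = (x \in S) && Q (pc_job x).
  by move=> x; rewrite mem_filter andbC.
split.
- by move=> x; rewrite memS' => /andP[/S1[]]. 
- move=> x; rewrite memS' => /andP[xS Qx] u u1 u2.
  have /hasP[y yS /andP[Hi cy]] := S4 x xS u u1 u2.
  apply/hasP; exists y => //; rewrite memS' yS /=.
  have [jx _ _] := S1 x xS; have [jy _ _] := S1 y yS.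
  exact: Hd Qx jx jy Hi.
- exact: pairwise_filter.
- by move=> x; rewrite memS' => /andP[/S1[]].
- move=> x; rewrite memS' => /andP[xS Qx].
  rewrite big_filter_cond /=.
  have [jx _ _] := S1 x xS.
  rewrite -(S3 _ jx); apply: eq_bigl => y.
  by case: (eqVneq (pc_job y) (pc_job x)) => [->|]; rewrite ?Qx ?andbF.
Qed.

Lemma has_piece (R : realFieldType) n (r p : 'I_n -> R) L S k :
  (forall j, 0 < p j) -> build_spec r p L S -> k \in L -> exists2 x, x \in S & pc_job x = k.
Proof.
move=> Hp [S1 S2 S3 S4] kL.
case: (boolP (has (fun x => pc_job x == k) S)) => [/hasP[x xS /eqP jx]|Hn]; first by exists x.
have := S3 k kL; rewrite big1_seq.
  by move=> E; have := Hp k; rewrite -E ltxx.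
move=> x /andP[jx xS]; exfalso; move/negP: Hn; apply; apply/hasP; by exists x.
Qed.

Lemma compl_analysis (R : realFieldType) n (r p : 'I_n -> R) L S k :
  (forall j, 0 < p j) -> build_spec r p L S -> k \in L ->
  exists rho (A : {set 'I_n}),
    [/\ compl_time S k = rho + \sum_(j in A) p j, (exists j0, rho = r j0),
        k \in A & forall j, j \in A -> [/\ j \in L, (index j L <= index k L)%N & rho <= r j]].
Proof.
move=> Hp BS kL.
have [x1 x1S jx1] := has_piece Hp BS kL.
have [[kl klS [jkl Ekl]] Hk] := compl_prop x1S jx1.
set C := compl_time S k in Ekl Hk *.
case: (BS) => S1 S2 S3 S4.
pose Q := fun j => (index j L <= index k L)%N.
have HQ : forall i j, Q j -> j \in L -> i \in L -> (index i L <= index j L)%N -> Q i.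
  by move=> i j; rewrite /Q => H _ _ H2; exact: leq_trans H2 H.
have [T1 T2 T3 T4 T5] := sub_props BS HQ.
set Sk := [seq x <- S | Q (pc_job x)] in T1 T2 T3 T4 T5.
have memSk : forall x, x \in Sk = (x \in S) && Q (pc_job x).
  by move=> x; rewrite mem_filter andbC.
have klSk : kl \in Sk by rewrite memSk klS /Q jkl leqnn.
have [kl1 kl2] := T1 kl klSk.
have klC : pc_start kl < C by rewrite -Ekl.
have klcov : forall u, pc_start kl <= u -> u < C -> has (covers u) Sk.
  by move=> u u1 u2; apply/hasP; exists kl => //; rewrite /covers u1 Ekl u2.
have [rho [R1 [j0 [j0S Ej0]] R3 R4 R5]] := rho_lemma T1 T2 klSk klC klcov.
have CutC : cut Sk C.
  move=> x y; rewrite !memSk => /andP[xS Qx] /andP[yS Qy] Ej Hx Hy.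
  set u := Num.max (pc_start kl) (pc_start x).
  have u1 : pc_start x <= u by rewrite /u le_max lexx orbT.
  have u2 : pc_start kl <= u by rewrite /u le_max lexx.
  have u3 : u < C by rewrite /u gt_max klC Hx.
  have [_ a1 _] := S1 x xS.
  have /hasP[z zS /andP[Hi cz]] := S4 y yS u (ltac:(rewrite -Ej; exact: le_trans a1 u1)) (lt_trans u3 Hy).
  have ckl : covers u kl by rewrite /covers u2 Ekl u3.
  have Ez := overlap S2 zS klS cz ckl.
  rewrite Ez jkl -Ej in Hi.
  have [jxL _ _] := S1 x xS.
  have Eq := index_eq_inj kL jxL (anti_leq (introT andP (conj Hi Qx))).
  have := Hk y yS (ltac:(by rewrite -Ej -Eq)); lra.
have Hblk := block T3 T4 (le_trans R1 (ltW klC)) R4 CutC R3 T5.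
exists rho, (blockset Sk rho C); split.
- by rewrite -Hblk; lra.
- by exists (pc_job j0).
- rewrite inE; apply/hasP; exists kl => //; rewrite jkl eqxx -Ekl kl2 /=.
  exact: le_lt_trans R1 kl2.
- move=> j; rewrite inE => /hasP[x xSk /andP[/andP[/eqP jx x1'] x2]].
  move: (xSk); rewrite memSk => /andP[xS Qx].
  have [jL _ _] := S1 x xS.
  rewrite -jx; split => //; exact: R5.
Qed.

Lemma start_analysis (R : realFieldType) n (r p : 'I_n -> R) L S k :
  (forall j, 0 < p j) -> build_spec r p L S -> k \in L ->
  exists j0 (A : {set 'I_n}),
    start_time S k = r j0 + \sum_(j in A) p j /\ forall j, j \in A -> j \in L.
Proof.
move=> Hp BS kL.
have [x1 x1S jx1] := has_piece Hp BS kL.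
have [[x0 x0S [jx0 Ex0]] Hk] := start_prop x1S jx1.
set v := start_time S k in Ex0 Hk *.
case: (BS) => S1 S2 S3 S4.
have [_ rx0 x0lt] := S1 x0 x0S; rewrite jx0 Ex0 in rx0.
case: (eqVneq (r k) v) => [Erv | Nrv].
  have E0 : \sum_(j in (set0 : {set 'I_n})) p j = 0 by rewrite big_set0.
  exists k, set0; split; first by rewrite E0 addr0.
  by move=> j; rewrite in_set0.
have rkv : r k < v by rewrite lt_neqAle Nrv rx0.
pose Q := fun j => (index j L < index k L)%N.
have HQ : forall i j, Q j -> j \in L -> i \in L -> (index i L <= index j L)%N -> Q i.
  by move=> i j; rewrite /Q => H _ _ H2; exact: leq_ltn_trans H2 H.
have [T1 T2 T3 T4 T5] := sub_props BS HQ.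
set Sk := [seq x <- S | Q (pc_job x)] in T1 T2 T3 T4 T5.
have memSk : forall x, x \in Sk = (x \in S) && Q (pc_job x).
  by move=> x; rewrite mem_filter andbC.
have cov : forall u, r k <= u -> u < v -> has (covers u) Sk.
  move=> u u1 u2.
  have h1 : r (pc_job x0) <= u by rewrite jx0.
  have h2 : u < pc_end x0 by rewrite (lt_trans u2) // -Ex0.
  have /hasP[z zS /andP[Hi cz]] := S4 x0 x0S u h1 h2.
  apply/hasP; exists z => //; rewrite memSk zS /=.
  rewrite jx0 in Hi; rewrite /Q ltn_neqAle Hi andbT.
  apply/negP => /eqP E.
  have [jzL _ _] := S1 z zS.
  have Ejz := index_eq_inj jzL kL E.
  move: cz => /andP[c1 c2]; have := Hk z zS Ejz; lra.
have /hasP[y0 y0S cy0] := cov (r k) (lexx _) rkv.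
move: (cy0) => /andP[cy1 cy2].
have y0v : pc_start y0 < v by exact: le_lt_trans cy1 rkv.
have y0c : forall u, pc_start y0 <= u -> u < v -> has (covers u) Sk.
  move=> u u1 u2; case: (ltrP u (pc_end y0)) => H.
    by apply/hasP; exists y0 => //; rewrite /covers u1 H.
  apply: cov => //; exact: ltW (lt_le_trans cy2 H).
have [rho [R1 [j0 [j0S Ej0]] R3 R4 R5]] := rho_lemma T1 T2 y0S y0v y0c.
have Cutv : cut Sk v.
  move=> x y; rewrite !memSk => /andP[xS Qx] /andP[yS Qy] Ej Hx Hy.
  have [_ a1 _] := S1 x xS.
  have h1 : r (pc_job y) <= v by rewrite -Ej; exact: le_trans a1 (ltW Hx).
  have /hasP[z zS /andP[Hi cz]] := S4 y yS v h1 Hy.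
  have cx0 : covers v x0 by rewrite /covers Ex0 lexx -Ex0.
  have Ez := overlap S2 zS x0S cz cx0.
  rewrite Ez jx0 -Ej in Hi.
  by move: Qx; rewrite /Q ltnNge Hi.
have Hblk := block T3 T4 (le_trans R1 (ltW y0v)) R4 Cutv R3 T5.
exists (pc_job j0), (blockset Sk rho v); split.
- by rewrite -Ej0 -Hblk; lra.
- move=> j; rewrite inE => /hasP[x xSk /andP[/andP[/eqP jx _] _]].
  move: xSk; rewrite memSk => /andP[xS _].
  by have [jL _ _] := S1 x xS; rewrite -jx.
Qed.


Lemma max_exists (R : realFieldType) (l : seq R) (P : R -> Prop) :
  (forall v, P v -> v \in l) -> (exists v, P v) -> exists v, P v /\ forall w, P w -> w <= v.
Proof.
elim: l P => [|a l IH] P Hl [v0 Pv0]; first by have := Hl v0 Pv0.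
pose P' := fun v => P v /\ v != a.
case: (classic (exists v, P' v)) => [HP'|HnP'].
- have Hl' : forall v, P' v -> v \in l.
    by move=> v [Pv Na]; have := Hl v Pv; rewrite inE (negbTE Na).
  have [m [[Pm _] Hm]] := IH P' Hl' HP'.
  case: (classic (P a)) => Pa.
  + case: (lerP a m) => H.
    * exists m; split => // w Pw; case: (eqVneq w a) => [->//|Nw]; exact: Hm.
    * exists a; split => // w Pw; case: (eqVneq w a) => [->//|Nw].
      exact: le_trans (Hm w (conj Pw Nw)) (ltW H).
  + exists m; split => // w Pw; case: (eqVneq w a) => [Ew|Nw]; first by rewrite Ew in Pw.
    exact: Hm.
- have Pa : P a.
    case: (eqVneq v0 a) => [<- //|N]; exfalso; apply: HnP'; by exists v0.
  exists a; split => // w Pw; case: (eqVneq w a) => [->//|Nw].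
  exfalso; apply: HnP'; by exists w.
Qed.

Lemma has_piece' (R : realFieldType) n (s : seq (piece R n)) (k : 'I_n) (pk : R) :
  \sum_(x <- s | pc_job x == k) (pc_end x - pc_start x) = pk -> 0 < pk ->
  exists2 x, x \in s & pc_job x = k.
Proof.
move=> E Hp.
case: (boolP (has (fun x => pc_job x == k) s)) => [/hasP[x xS /eqP jx]|Hn]; first by exists x.
move: E; rewrite big1_seq.
  by move=> E; move: Hp; rewrite -E ltxx.
move=> x /andP[jx xS]; exfalso; move/negP: Hn; apply; apply/hasP; by exists x.
Qed.

Lemma dominance (R : realFieldType) n (r p : 'I_n -> R) s (Jb : {set 'I_n}) sg :
  (forall j, 0 < p j) -> feasible r p s Jb sg ->
  exists S, [/\ feasible r p s Jb S,
     forall j, j \in Jb -> compl_time S j <= compl_time sg j,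
     forall j, j \in Jb -> exists j0 (A : {set 'I_n}),
         compl_time S j = r j0 + \sum_(i in A) p i /\ (#|A| <= s)%N
   & forall j, j \in Jb -> exists j0 (A : {set 'I_n}),
         start_time S j = r j0 + \sum_(i in A) p i /\ (#|A| <= s)%N].
Proof.
move=> Hp [F1 F2 F3 F4].
pose C' := compl_time sg.
pose leT := fun i j : 'I_n => C' i <= C' j.
pose L := sort leT (enum Jb).
have uL : uniq L by rewrite sort_uniq enum_uniq.
have memL : forall j, (j \in L) = (j \in Jb) by move=> j; rewrite mem_sort mem_enum.
have sL : sorted leT L by apply: sort_sorted => i j; exact: le_total.
have ord : forall i j, i \in L -> j \in L -> (index i L <= index j L)%N -> C' i <= C' j.
  move=> i j iL jL H.
  have := @sorted_leq_nth _ leT (fun a b c => @le_trans _ _ (C' a) (C' b) (C' c))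
     (fun a => lexx (C' a)) i L sL (index i L) (index j L).
  rewrite !inE !index_mem.
  have Ej : nth i L (index j L) = j by rewrite (set_nth_default j) ?index_mem // nth_index.
  rewrite (nth_index i iL) Ej; by apply.
have [S BS] := build r Hp uL.
have subA : forall A : {set 'I_n}, (forall j, j \in A -> j \in L) -> (#|A| <= s)%N.
  move=> A HA; apply: leq_trans F1; apply: subset_leq_card; apply/subsetP => j /HA.
  by rewrite memL.
case: (BS) => S1 S2 S3 S4.
exists S; split.
- split => //.
  + by move=> x /S1 [a1 a2 a3]; rewrite -memL.
  + by move=> j; rewrite -memL => /S3.
- move=> k; rewrite -memL => kL.
  have [rho [A [E1 _ kA HA]]] := compl_analysis Hp BS kL.
  rewrite E1.
  have [x1 x1S jx1] := has_piece' (F4 k (ltac:(by rewrite -memL))) (Hp k).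
  have [_ Hk'] := compl_prop x1S jx1.
  have [a1 a2 a3] := F2 x1 x1S.
  have [_ _ rk] := HA k kA.
  have Hsum : \sum_(j in A) p j = \sum_(x <- [seq x <- sg | pc_job x \in A]) len x.
    rewrite big_filter -regroup; apply: eq_bigr => j jA.
    have [jL _ _] := HA j jA; rewrite memL in jL.
    by rewrite -F4.
  have Hle : \sum_(x <- [seq x <- sg | pc_job x \in A]) len x <= C' k - rho.
    apply: (meas_le (k := (size sg).+1)).
    + by rewrite size_filter ltnS count_size.
    + have := Hk' x1 x1S jx1; rewrite jx1 in a2; rewrite /C'; lra.
    + exact: pairwise_filter.
    + move=> x; rewrite mem_filter => /andP[xA xS].
      have [b1 b2 b3] := F2 x xS; have [jL ji rj] := HA _ xA.
      split => //; first exact: le_trans rj b2.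
      have := compl_prop xS (erefl _) => -[_ Hx].
      apply: le_trans (Hx x xS (erefl _)) _; exact: ord.
  rewrite Hsum; rewrite /C' in Hle; lra.
- move=> k; rewrite -memL => kL.
  have [rho [A [E1 [j0 Ej0] _ HA]]] := compl_analysis Hp BS kL.
  exists j0, A; rewrite E1 Ej0; split => //; by apply: subA => j /HA [] .
- move=> k; rewrite -memL => kL.
  have [j0 [A [E1 HA]]] := start_analysis Hp BS kL.
  exists j0, A; split => //; exact: subA.
Qed.


Unset Implicit Arguments. Set Strict Implicit.

Theorem mainTheorem11 (R : realFieldType) (n s : nat) (r p : 'I_n -> R)
    (f : 'I_n -> R -> R) :
  (forall j, 0 <= r j) ->
  (forall j, 0 < p j) ->
  (forall j (x y : R), x <= y -> f j y <= f j x) ->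
  exists (Jb : {set 'I_n}) (sg : seq (piece R n)),
    [/\ feasible r p s Jb sg,
        (forall (Jb' : {set 'I_n}) (sg' : seq (piece R n)),
            feasible r p s Jb' sg' -> value f Jb' sg' <= value f Jb sg)
      & (forall j, j \in Jb ->
            inT r p s (start_time sg j) /\ inT r p s (compl_time sg j))].
Proof.
move=> _ Hp Hf.
pose TT := [seq r j + \sum_(i in A) p i | j : 'I_n <- enum 'I_n, A : {set 'I_n} <- enum ({set 'I_n} : finType)].
pose good := fun Jb S => [/\ feasible r p s Jb S,
   forall j, j \in Jb -> inT r p s (start_time S j) /\ inT r p s (compl_time S j)
 & forall j, j \in Jb -> compl_time S j \in TT].
pose phi := fun c : ({set 'I_n} * {ffun 'I_n -> 'I_(size TT).+1})%type => \sum_(j in c.1) f j (nth 0 TT (c.2 j)).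
pose P := fun v => exists Jb S, good Jb S /\ value f Jb S = v.
have HPl : forall v, P v -> v \in [seq phi c | c <- enum (({set 'I_n} * {ffun 'I_n -> 'I_(size TT).+1})%type : finType)].
  move=> v [Jb [S [[G1 G2 G3] <-]]].
  have -> : value f Jb S = phi (Jb, [ffun j => inord (index (compl_time S j) TT)]).
    rewrite /value /phi /=; apply: eq_bigr => j jJ; rewrite ffunE inordK ?nth_index //.
      exact: G3.
    by apply: (ltn_trans _ (ltnSn _)); rewrite index_mem; exact: G3.
  by apply: map_f; rewrite mem_enum.
have HP0 : exists v, P v.
  exists (value f set0 [::]), set0, [::]; split => //; split.
  - split => //; [by rewrite cards0 | by move=> j; rewrite in_set0].
  - by move=> j; rewrite in_set0.
  - by move=> j; rewrite in_set0.
have [v [[Jb [S [[G1 G2 G3] Ev]]] Hmax]] := max_exists HPl HP0.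
exists Jb, S; split => //.
move=> Jb' sg' Hfe.
have [S' [D1 D2 D3 D4]] := dominance Hp Hfe.
have gS' : good Jb' S'.
  split => //.
  - move=> j jJ; split.
    + have [j0 [A [E HA]]] := D4 j jJ; rewrite E; exact: inT_block.
    + have [j0 [A [E HA]]] := D3 j jJ; rewrite E; exact: inT_block.
  - move=> j jJ; have [j0 [A [E HA]]] := D3 j jJ; rewrite E.
    apply: (allpairs_f (fun (j : 'I_n) (A : {set 'I_n}) => r j + \sum_(i in A) p i)); by rewrite mem_enum.
rewrite Ev; apply: le_trans (Hmax _ (ex_intro _ Jb' (ex_intro _ S' (conj gS' (erefl _))))).
apply: ler_sum => j jJ; exact: Hf (D2 j jJ).
Qed.
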